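(* Let $\varphi\colon (A,m,K)\to (B,n,L)$ and $\psi\colon B\to C$ be local homomorphisms of noetherian local rings. Let $\psi_{mB}\colon B/mB\to C/mC$ be the induced map and $\pi_{mB}\colon B\to B/mB$, $\pi_{mC}\colon C\to C/mC$ the canonical surjections. (1) The following are equivalent: (i) $\psi\circ\varphi$ is basically regular; (ii) $\varphi$ is basically regular and $\operatorname{rd}(\psi)=\operatorname{rd}(\psi_{mB})$; (iii) $\varphi$ is basically regular and $\operatorname{rd}(\pi_{mB})=\operatorname{rd}(\pi_{mC})$. (2) $\psi$ is basically regular if and only if $\psi_{mB}$ is basically regular and $\operatorname{rd}(\psi\circ\varphi)=\operatorname{rd}(\varphi)$. (3) If $\varphi$ and $\psi$ are basically regular, then $\psi\circ\varphi$ is basically regular. (4) If $\varphi$ is surjective and $\psi\circ\varphi$ is basically regular, then $\varphi$ and $\psi$ are basically regular.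
   Context: All rings are commutative and noetherian with identity. A local homomorphism $\varphi\colon (A,m,K)\to(B,n,L)$ satisfies $\varphi(m)\subseteq n$. The regularity defect $\operatorname{rd}(\varphi)$ is the $L$-dimension of the kernel of the natural $L$-linear map $m/m^2\otimes_K L\to n/n^2$, $\bar x\otimes\bar b\mapsto \overline{\varphi(x)b}$; $\varphi$ is basically regular if for every minimal basis (minimal generating set) $x_1,\dots,x_r$ of $m$, the elements $\varphi(x_1),\dots,\varphi(x_r)$ are part of a minimal basis of $n$ (vacuously true if $A$ is a field). *)

(* Defs.v *)
From HB Require Import structures.
From mathcomp Require Import all_boot all_order all_algebra.
From Stdlib Require Import ClassicalEpsilon.
Set Implicit Arguments. Unset Strict Implicit. Unset Printing Implicit Defensive.
Import GRing.Theory.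
Local Open Scope ring_scope.

(* R-linear combination  sum_i c_i x_i  (entries of c beyond size x are ignored) *)
Definition lin_comb (R : comNzRingType) (c x : seq R) : R :=
  \sum_(i < size x) c`_i * x`_i.


Definition is_ideal {R : comNzRingType} (I : R -> Prop) : Prop :=
  [/\ I 0, (forall x y, I x -> I y -> I (x + y)) & (forall a x, I x -> I (a * x))].


Definition fin_gen {R : comNzRingType} (I : R -> Prop) : Prop :=
  exists g : seq R, forall z, I z <-> exists c : seq R, z = lin_comb c g.

Definition noetherian (R : comNzRingType) : Prop := forall I : R -> Prop, is_ideal I -> fin_gen I.

(* (R, M) is a local ring with maximal ideal M: M is a proper ideal and
   every element outside M is a unit, so M is the unique maximal ideal *)
Definition local_ring {R : comNzRingType} (M : R -> Prop) : Prop :=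
  [/\ is_ideal M, ~ M 1 & forall x, ~ M x -> exists y, x * y = 1].

Definition zero_ideal (R : comNzRingType) : R -> Prop := fun z => z = 0.
Arguments zero_ideal R : clear implicits.

Definition ideal_add {R : comNzRingType} (I J : R -> Prop) : R -> Prop :=
  fun z => exists u v, [/\ I u, J v & z = u + v].

Definition ideal_sq {R : comNzRingType} (M : R -> Prop) : R -> Prop :=
  fun z => exists a b : seq R, size a = size b /\
    (forall i, (i < size a)%N -> M a`_i /\ M b`_i) /\ z = lin_comb a b.

Definition ideal_ext {R S : comNzRingType} (f : R -> S) (M : R -> Prop) : S -> Prop :=
  fun z => exists (a : seq R) (b : seq S),
    (forall i, (i < size a)%N -> M a`_i) /\ z = lin_comb b (map f a).

Definition local_hom {R S : comNzRingType} (f : R -> S) (M : R -> Prop) (N : S -> Prop) : Prop :=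
  forall x, M x -> N (f x).

(* Convention: a local ring of the form R/I, with I contained in the
   maximal ideal M of R, is represented by the pair (I, M); its maximal
   ideal is M/I and its residue field is R/M.  All quotient rings used in
   the statement (B/mB, C/mC, and R itself with I = 0) are of this form. *)

(* the classes of the family y in N/Q are linearly independent over S/N *)
Definition lin_indep_mod (S : comNzRingType) (N Q : S -> Prop) (y : seq S) : Prop :=
  forall c : seq S, Q (lin_comb c y) -> forall i, (i < size y)%N -> N c`_i.


(* largest d with P d (used only for P bounded, as here by noetherianity) *)
Definition dimof (P : nat -> Prop) : nat :=
  epsilon (inhabits 0%N) (fun d => P d /\ forall k, P k -> (k <= d)%N).


(* dim_{R/M} of Mbar/Mbar^2 = M/(M^2 + I), for the local ring R/I *)
Definition cotan_dim {R : comNzRingType} (I M : R -> Prop) : nat :=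
  dimof (fun k => exists x : seq R, [/\ size x = k,
     (forall i, (i < k)%N -> M x`_i) &
     lin_indep_mod M (ideal_add (ideal_sq M) I) x]).

(* For the local map fbar : R/I -> S/J induced by f (f(I) in J),
   dimension over L = S/N of the image of  Mbar/Mbar^2 (x)_K L -> Nbar/Nbar^2,
   i.e. of the L-span of the classes of f(M) in N/(N^2 + J). *)
Definition image_dim {R S : comNzRingType} (f : R -> S) (M : R -> Prop) (J N : S -> Prop) : nat :=
  dimof (fun k => exists x : seq R, [/\ size x = k,
     (forall i, (i < k)%N -> M x`_i) &
     lin_indep_mod N (ideal_add (ideal_sq N) J) (map f x)]).

(* regularity defect of fbar : (R/I, M/I) -> (S/J, N/J): dimension of the
   kernel of  Mbar/Mbar^2 (x)_K L -> Nbar/Nbar^2, computed by rank-nullity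
   (dim_L (V (x)_K L) = dim_K V). *)
Definition reg_defect {R S : comNzRingType} (f : R -> S) (I M : R -> Prop) (J N : S -> Prop) : nat :=
  (cotan_dim I M - image_dim f M J N)%N.

Definition generates {R : comNzRingType} (I M : R -> Prop) (x : seq R) : Prop :=
  (forall i, (i < size x)%N -> M x`_i) /\
  forall z, M z -> exists c : seq R, I (z - lin_comb c x).

Definition min_basis {R : comNzRingType} (I M : R -> Prop) (x : seq R) : Prop :=
  generates I M x /\ forall x' : seq R, generates I M x' -> (size x <= size x')%N.

Definition basically_regular {R S : comNzRingType} (f : R -> S) (I M : R -> Prop) (J N : S -> Prop) : Prop :=
  forall x : seq R, min_basis I M x ->
    exists y : seq S, min_basis J N (map f x ++ y).

(* Main.v *)
Require Import Defs.
From HB Require Import structures.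
From mathcomp Require Import all_boot all_order all_algebra.
From mathcomp Require Import ring_quotient generic_quotient zify.
From Stdlib Require Import ClassicalEpsilon PropExtensionality FunctionalExtensionality.

Set Implicit Arguments. Unset Strict Implicit. Unset Printing Implicit Defensive.
Import GRing.Theory.
Local Open Scope ring_scope.

Definition pb (P : Prop) : bool := if excluded_middle_informative P then true else false.
Lemma pbP (P : Prop) : reflect P (pb P).
Proof. rewrite /pb; case: excluded_middle_informative => h; by constructor. Qed.

Section Residue.
Variables (S : comNzRingType) (N : S -> Prop) (HN : local_ring N).

Definition Nb (H : local_ring N) : pred S := fun x => pb (N x).

Lemma Nb_idealr : idealr_closed (Nb HN).
Proof.
have [[N0 ND NM] N1 _] := HN; split.
- by apply/pbP.
- by apply/pbP.
- move=> a u v /pbP Nu /pbP Nv; apply/pbP; apply: ND => //; exact: NM.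
Qed.

HB.instance Definition _ := isIdealr.Build S (Nb HN) Nb_idealr.

Definition Res := {ideal_quot (Nb HN : idealr S)}.
HB.instance Definition _ := GRing.ComNzRing.on Res.
Definition rpi : S -> Res := \pi_(Res)%qT.
HB.instance Definition _ := GRing.RMorphism.on rpi.

Lemma rpi0 x : rpi x = 0 <-> N x.
Proof.
have := Quotient.idealrBE (Nb HN : idealr S) x 0 => E.
split.
- move=> h. have : (x - 0) \in (Nb HN : pred S). rewrite E. apply/eqP.
    by rewrite -/(rpi x) h -(raddf0 rpi).
  by rewrite subr0 => /pbP.
- move=> h. apply/eqP. rewrite -(raddf0 rpi). rewrite /rpi -E subr0. by apply/pbP.
Qed.
Lemma rpi_repr (l : Res) : rpi (repr l) = l.
Proof. by rewrite /rpi reprK. Qed.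
Lemma rpi_surj (l : Res) : exists x, rpi x = l.
Proof. exists (repr l). by rewrite /rpi reprK. Qed.

Definition uinv (x : S) : S := epsilon (inhabits 0) (fun y => x * y = 1).
Definition rinv (l : Res) : Res := if l == 0 then 0 else rpi (uinv (repr l)).
Lemma rinv_mulVf l : l != 0 -> rinv l * l = 1.
Proof.
move=> l0; rewrite /rinv (negPf l0).
have rl : rpi (repr l) = l by rewrite /rpi reprK.
have nN : ~ N (repr l) by move=> /rpi0; rewrite rl => /eqP; rewrite (negPf l0).
have [_ _ Hu] := HN.
have ex := Hu _ nN.
have := epsilon_spec (inhabits 0) (fun y => repr l * y = 1) ex.
rewrite -/(uinv _) => e.
by rewrite -{2}rl -rmorphM mulrC e rmorph1.
Qed.
Lemma rinv0 : rinv 0 = 0.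
Proof. by rewrite /rinv eqxx. Qed.
HB.instance Definition _ := GRing.ComNzRing_isField.Build Res rinv_mulVf rinv0.
End Residue.

Definition rhom (R S : comNzRingType) (f : R -> S) :=
  (forall x y, f (x + y) = f x + f y) /\ (forall x y, f (x * y) = f x * f y).

Section Util.
Variable R : comNzRingType.

Lemma ideal_sum (I : R -> Prop) n (F : 'I_n -> R) :
  is_ideal I -> (forall i, I (F i)) -> I (\sum_(i < n) F i).
Proof. case=> I0 ID _ HF; apply: big_ind => //. Qed.

Lemma ideal_sub (I : R -> Prop) x y : is_ideal I -> I x -> I y -> I (x - y).
Proof. case=> I0 ID IM Ix Iy; apply: ID => //; rewrite -mulN1r; exact: IM. Qed.

Lemma lin_comb_ideal (I : R -> Prop) c x :
  is_ideal I -> (forall i, (i < size x)%N -> I x`_i) -> I (lin_comb c x).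
Proof.
move=> HI Hx; apply: ideal_sum => // i; case: HI => _ _ IM; apply: IM; exact: Hx.
Qed.

Lemma lin_comb_ideal_l (I : R -> Prop) c x :
  is_ideal I -> (forall i, (i < size x)%N -> I c`_i) -> I (lin_comb c x).
Proof.
move=> HI Hx; apply: ideal_sum => // i; case: HI => _ _ IM; rewrite mulrC; apply: IM; exact: Hx.
Qed.

Lemma lin_comb_nil (x : seq R) : lin_comb [::] x = 0.
Proof. by rewrite /lin_comb big1 // => i _; rewrite nth_nil mul0r. Qed.

Lemma lin_comb_cat (a1 a2 b1 b2 : seq R) : size a1 = size b1 ->
  lin_comb (a1 ++ a2) (b1 ++ b2) = lin_comb a1 b1 + lin_comb a2 b2.
Proof.
move=> s; rewrite /lin_comb.
have -> : \sum_(i < size (b1 ++ b2)) (a1 ++ a2)`_i * (b1 ++ b2)`_i =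
          \sum_(i < size b1 + size b2) (a1 ++ a2)`_i * (b1 ++ b2)`_i.
  by rewrite size_cat.
rewrite big_split_ord /=; congr (_ + _); apply: eq_bigr => i _.
  by rewrite !nth_cat s (ltn_ord i).
by rewrite !nth_cat s ltnNge leq_addr /= addKn.
Qed.

Lemma lin_comb_scale (r : R) (a b : seq R) : lin_comb [seq r * z | z <- a] b = r * lin_comb a b.
Proof.
rewrite /lin_comb mulr_sumr; apply: eq_bigr => i _.
case: (ltnP i (size a)) => h.
  by rewrite (nth_map 0) // mulrA.
by rewrite [X in X * _]nth_default ?size_map // [X in r * (X * _)]nth_default // !mul0r mulr0.
Qed.

Lemma ideal_sq_ideal (M : R -> Prop) : is_ideal M -> is_ideal (ideal_sq M).
Proof.
move=> HM; split.
- exists [::], [::]; split => //; split => //; by rewrite lin_comb_nil.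
- move=> x y [a1 [b1 [s1 [H1 ->]]]] [a2 [b2 [s2 [H2 ->]]]].
  exists (a1 ++ a2), (b1 ++ b2); split; first by rewrite !size_cat s1 s2.
  split; last by rewrite lin_comb_cat.
  move=> i; rewrite size_cat => hi; rewrite !nth_cat -s1.
  case: ifP => h; first exact: H1.
  by apply: H2; rewrite ltn_subLR ?hi // leqNgt h.
- move=> r x [a [b [s [H ->]]]].
  exists [seq r * z | z <- a], b; split; first by rewrite size_map.
  split; last by rewrite lin_comb_scale.
  move=> i; rewrite size_map => hi; rewrite (nth_map 0) //; split; last by case: (H i hi).
  case: HM => _ _ IM; apply: IM; by case: (H i hi).
Qed.

Lemma ideal_add_ideal (I J : R -> Prop) : is_ideal I -> is_ideal J -> is_ideal (ideal_add I J).
Proof.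
move=> [I0 ID IM] [J0 JD JM]; split.
- by exists 0, 0; split => //; rewrite addr0.
- move=> x y [u1 [v1 [h1 h2 ->]]] [u2 [v2 [h3 h4 ->]]].
  exists (u1 + u2), (v1 + v2); split; [exact: ID | exact: JD | ].
  by rewrite addrACA.
- move=> r x [u [v [h1 h2 ->]]]; exists (r * u), (r * v); split; [exact: IM | exact: JM|].
  by rewrite mulrDr.
Qed.

Lemma zero_ideal_ideal : is_ideal (zero_ideal R).
Proof.
rewrite /zero_ideal; split => //.
- by move=> x y -> ->; rewrite addr0.
- by move=> r x ->; rewrite mulr0.
Qed.

End Util.

Lemma rhom0 (R S : comNzRingType) (f : R -> S) : rhom f -> f 0 = 0.
Proof. case=> fD _; have := fD 0 0; rewrite addr0 => e; apply: (@addrI _ (f 0)); by rewrite addr0 -e. Qed.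

Lemma rhom_sum (R S : comNzRingType) (f : R -> S) n (F : 'I_n -> R) :
  rhom f -> f (\sum_(i < n) F i) = \sum_(i < n) f (F i).
Proof.
move=> hf; have f0 := rhom0 hf; case: hf => fD _.
by apply: (big_morph f fD f0).
Qed.

Lemma lin_comb_map (R S : comNzRingType) (f : R -> S) c x : rhom f ->
  f (lin_comb c x) = lin_comb (map f c) (map f x).
Proof.
move=> hf; have f0 := rhom0 hf; rewrite /lin_comb rhom_sum // size_map.
apply: eq_bigr => i _; case: hf => _ fM; rewrite fM [(map f x)`_i](nth_map 0) //.
case: (ltnP i (size c)) => h; first by rewrite (nth_map 0).
by rewrite [c`_i]nth_default // [(map f c)`_i]nth_default ?size_map // f0.
Qed.

Lemma ideal_ext_ideal (R S : comNzRingType) (f : R -> S) (M : R -> Prop) :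
  is_ideal (ideal_ext f M).
Proof.
split.
- by exists [::], [::]; split => //; rewrite lin_comb_nil.
- move=> x y [a1 [b1 [H1 ->]]] [a2 [b2 [H2 ->]]].
  pose b1' := mkseq (fun i => b1`_i) (size a1).
  have e1 : lin_comb b1 (map f a1) = lin_comb b1' (map f a1).
    rewrite /lin_comb size_map; apply: eq_bigr => i _; by rewrite nth_mkseq.
  exists (a1 ++ a2), (b1' ++ b2); split.
    move=> i; rewrite size_cat nth_cat; case: ifP => h; first by move=> _; exact: H1.
    by move=> hi; apply: H2; rewrite ltn_subLR ?hi // leqNgt h.
  by rewrite map_cat lin_comb_cat ?size_mkseq ?size_map // e1.
- move=> r x [a [b [H ->]]]; exists a, [seq r * z | z <- b]; split => //.
  by rewrite lin_comb_scale.
Qed.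

Lemma rhom_rmorph (R S : comNzRingType) (f : {rmorphism R -> S}) : rhom f.
Proof. by split => x y; rewrite ?rmorphD ?rmorphM. Qed.

Lemma rhom_id (R : comNzRingType) : rhom (@id R).
Proof. by []. Qed.

Lemma rhom_comp (R S T : comNzRingType) (f : R -> S) (g : S -> T) :
  rhom f -> rhom g -> rhom (g \o f)%FUN.
Proof. by move=> [fD fM] [gD gM]; split => x y /=; rewrite ?fD ?fM ?gD ?gM. Qed.

Lemma dimof_eq (P : nat -> Prop) d0 : P d0 -> (forall k, P k -> (k <= d0)%N) -> dimof P = d0.
Proof.
move=> Pd Hd; rewrite /dimof.
have ex : exists d, P d /\ forall k, P k -> (k <= d)%N by exists d0.
have [P1 H1] := epsilon_spec (inhabits 0%N) _ ex.
apply/eqP; rewrite eqn_leq Hd //=; exact: H1.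
Qed.

Section SubspaceExists.
Variables (F : fieldType) (d : nat) (P : 'rV[F]_d -> Prop).
Hypotheses (P0 : P 0) (PD : forall u v, P u -> P v -> P (u + v))
  (PZ : forall a u, P u -> P (a *: u)).

Definition goodmx (K : 'M[F]_d) := forall w : 'rV_d, (w <= K)%MS -> P w.

Lemma subspace_exists : exists K : 'M[F]_d, forall v, (v <= K)%MS <-> P v.
Proof.
pose Q r := pb (exists K, goodmx K /\ \rank K = r).
have ex : exists r, Q r.
  exists 0%N; apply/pbP; exists 0; split; last by rewrite mxrank0.
  by move=> w; rewrite submx0 => /eqP ->.
have bound : forall r, Q r -> (r <= d)%N.
  by move=> r /pbP [K [_ <-]]; exact: rank_leq_row.
case: (ex_maxnP ex bound) => r /pbP [K [gK rK]] maxr.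
exists K => v; split; first exact: gK.
move=> Pv; case: (boolP (v <= K)%MS) => // nv.
have gK' : goodmx (K + v)%MS.
  move=> w /sub_addsmxP [u ->]; apply: PD; first by apply: gK; exact: submxMl.
  by rewrite [u.2]mx11_scalar mul_scalar_mx; apply: PZ.
have := maxr (\rank (K + v)%MS) (introT (pbP _) (ex_intro _ _ (conj gK' erefl))).
have := mxrank_leqif_sup (addsmxSl K v).
move=> [le eq]; rewrite -rK => le2.
have eqr : \rank K = \rank (K + v)%MS by apply/eqP; rewrite eqn_leq le le2.
move: eq; rewrite eqr eqxx => /esym; rewrite addsmx_sub submx_refl /= => vK.
by rewrite vK in nv.
Qed.
End SubspaceExists.

Lemma rank_coker_sum (F : fieldType) m n k (Y : 'M[F]_(m, n)) (K : 'M[F]_(k, n)) :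
  \rank (Y *m cokermx K) = (\rank (Y + K)%MS - \rank K)%N.
Proof.
have eqK : (kermx (cokermx K) :=: K)%MS.
  apply/eqmxP/andP; split.
    by rewrite submxE; apply/eqP; exact: mulmx_ker.
  by apply/sub_kermxP; exact: mulmx_coker.
have h1 := mxrank_mul_ker Y (cokermx K).
rewrite (cap_eqmx (eqmx_refl Y) eqK) in h1.
have h2 := mxrank_sum_cap Y K.
lia.
Qed.

Section Coord.
Variables (S : comNzRingType) (N : S -> Prop) (HN : local_ring N) (g : seq S)
  (HG : forall z, N z <-> exists c, z = lin_comb c g).
Local Notation F := (Res HN).
Local Notation pi := (rpi HN).
Local Notation d := (size g).

Lemma N_ideal : is_ideal N. Proof. by case: HN. Qed.

Definition lcv (u : 'rV[S]_d) : S := \sum_(j < d) u 0 j * g`_j.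
Definition rowc (c : seq S) : 'rV[S]_d := \row_j c`_j.
Lemma lin_comb_lcv c : lin_comb c g = lcv (rowc c).
Proof. by rewrite /lcv /lin_comb; apply: eq_bigr => j _; rewrite mxE. Qed.
Definition seqr (u : 'rV[S]_d) : seq S := [seq u 0 j | j <- enum 'I_d].
Lemma seqr_nth u (j : 'I_d) : (seqr u)`_j = u 0 j.
Proof. by rewrite (nth_map j) ?size_enum_ord // nth_ord_enum. Qed.
Lemma size_seqr u : size (seqr u) = d.
Proof. by rewrite size_map size_enum_ord. Qed.
Lemma rowc_seqr u : rowc (seqr u) = u.
Proof.
by apply/matrixP => i j; rewrite !mxE ord1 seqr_nth.
Qed.
Lemma lcv_N u : N (lcv u).
Proof. by apply/HG; exists (seqr u); rewrite lin_comb_lcv rowc_seqr. Qed.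
Lemma lcv_delta (j : 'I_d) : lcv (delta_mx 0 j) = g`_j.
Proof.
rewrite /lcv (bigD1 j) //= big1 ?addr0; first by rewrite mxE !eqxx mul1r.
by move=> i ij; rewrite mxE eqxx /= (negPf ij) mul0r.
Qed.
Lemma g_N j : N g`_j.
Proof.
case: (ltnP j d) => h; first by rewrite -[j]/(nat_of_ord (Ordinal h)) -lcv_delta; apply: lcv_N.
by rewrite nth_default //; case: N_ideal.
Qed.
Lemma lcvD u v : lcv (u + v) = lcv u + lcv v.
Proof. by rewrite /lcv -big_split; apply: eq_bigr => j _; rewrite mxE mulrDl. Qed.
Lemma lcvZ a u : lcv (a *: u) = a * lcv u.
Proof. by rewrite /lcv mulr_sumr; apply: eq_bigr => j _; rewrite mxE mulrA. Qed.
Lemma lcvN u : lcv (- u) = - lcv u.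
Proof. by rewrite -scaleN1r lcvZ mulN1r. Qed.
Lemma lcvB u v : lcv (u - v) = lcv u - lcv v.
Proof. by rewrite lcvD lcvN. Qed.
Lemma lcv0 : lcv 0 = 0.
Proof. by rewrite -(scale0r 0) lcvZ mul0r. Qed.
Lemma lcv_sq (u : 'rV[S]_d) : (forall j, N (u 0 j)) -> ideal_sq N (lcv u).
Proof.
move=> Hu; exists (seqr u), g; split; first by rewrite size_seqr.
split; last by rewrite lin_comb_lcv rowc_seqr.
move=> i; rewrite size_seqr => hi; rewrite -[i]/(nat_of_ord (Ordinal hi)) seqr_nth.
by split; [exact: Hu| exact: g_N].
Qed.

Definition coefs (z : S) : 'rV[S]_d :=
  rowc (epsilon (inhabits [::]) (fun c => z = lin_comb c g)).
Lemma coefsK z : N z -> lcv (coefs z) = z.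
Proof.
move=> /HG ex; have := epsilon_spec (inhabits [::]) _ ex.
by rewrite lin_comb_lcv /coefs => <-.
Qed.

Definition liftm m n (M : 'M[F]_(m, n)) : 'M[S]_(m, n) := \matrix_(i, j) repr (M i j).
Lemma liftmK m n (M : 'M[F]_(m, n)) : map_mx pi (liftm M) = M.
Proof. by apply/matrixP => i j; rewrite !mxE rpi_repr. Qed.

Lemma map_mx_N m n (u : 'M[S]_(m, n)) : map_mx pi u = 0 -> forall i j, N (u i j).
Proof. by move=> /matrixP h i j; have := h i j; rewrite !mxE => /rpi0. Qed.

Section WithQ.
Variable Q : S -> Prop.
Hypotheses (HQ : is_ideal Q) (HQ2 : forall z, ideal_sq N z -> Q z).

Definition inK (v : 'rV[F]_d) := exists u, map_mx pi u = v /\ Q (lcv u).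
Lemma inK_lcv u : inK (map_mx pi u) <-> Q (lcv u).
Proof.
split; last by move=> h; exists u.
move=> [u' [e Qu']].
have : ideal_sq N (lcv (u - u')).
  apply: lcv_sq; apply: map_mx_N; by rewrite map_mxB e subrr.
move=> /HQ2; rewrite lcvB => Qd.
have -> : lcv u = (lcv u - lcv u') + lcv u' by rewrite subrK.
by case: HQ => _ QD _; apply: QD.
Qed.

Lemma inK_exists : exists K : 'M[F]_d, forall v, (v <= K)%MS <-> inK v.
Proof.
case: HQ => Q0 QD QM.
apply: subspace_exists.
- by exists 0; rewrite map_mx0 lcv0.
- move=> u v [u1 [<- h1]] [v1 [<- h2]]; exists (u1 + v1); rewrite map_mxD lcvD; split => //.
  exact: QD.
- move=> a u [u1 [<- h1]]; have [ra <-] := rpi_surj a.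
  exists (ra *: u1); rewrite map_mxZ lcvZ; split => //.
  exact: QM.
Qed.

Definition Kmx : 'M[F]_d := epsilon (inhabits 0) (fun K => forall v, (v <= K)%MS <-> inK v).
Lemma KmxP v : (v <= Kmx)%MS <-> inK v.
Proof. by have := epsilon_spec (inhabits 0) _ inK_exists; apply. Qed.

Definition Emx := cokermx Kmx.
Lemma EmxE : Emx = cokermx Kmx. Proof. by []. Qed.
Lemma Q_lcv u : Q (lcv u) <-> map_mx pi u *m Emx = 0.
Proof. by rewrite -inK_lcv -KmxP submxE; split => [/eqP|->]. Qed.

Definition cvec z := map_mx pi (coefs z).
Lemma cvec_lcv u : cvec (lcv u) *m Emx = map_mx pi u *m Emx.
Proof.
apply/eqP; rewrite -subr_eq0 -mulmxBl -map_mxB; apply/eqP/Q_lcv.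
rewrite lcvB coefsK; last by apply: lcv_N.
by rewrite subrr; case: HQ.
Qed.
Lemma Q_cvec z : N z -> (Q z <-> cvec z *m Emx = 0).
Proof. by move=> Nz; rewrite -{1}(coefsK Nz) Q_lcv. Qed.
Lemma cvec_eqQ z z' : N z -> N z' -> (Q (z - z') <-> cvec z *m Emx = cvec z' *m Emx).
Proof.
move=> Nz Nz'; rewrite -(coefsK Nz) -(coefsK Nz') -lcvB Q_lcv map_mxB mulmxBl.
rewrite !(coefsK Nz) !(coefsK Nz').
by split => [/eqP|->]; [rewrite subr_eq0 => /eqP|rewrite subrr].
Qed.
Lemma cvecD z1 z2 : N z1 -> N z2 -> cvec (z1 + z2) *m Emx = cvec z1 *m Emx + cvec z2 *m Emx.
Proof.
move=> N1 N2; rewrite -{1}(coefsK N1) -{1}(coefsK N2) -lcvD cvec_lcv.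
by rewrite map_mxD mulmxDl.
Qed.
Lemma cvecZ a z : N z -> cvec (a * z) *m Emx = pi a *: (cvec z *m Emx).
Proof.
by move=> Nz; rewrite -{1}(coefsK Nz) -lcvZ cvec_lcv map_mxZ -scalemxAl.
Qed.

End WithQ.


Definition cmxS k (x : seq S) : 'M[S]_(k, d) := \matrix_(i < k, j < d) coefs x`_i 0 j.
Definition cmx k x : 'M[F]_(k, d) := map_mx pi (cmxS k x).
Lemma row_cmx k x (i : 'I_k) : row i (cmx k x) = cvec x`_i.
Proof. by apply/rowP => j; rewrite !mxE. Qed.
Definition lcx k (c : 'rV[S]_k) (x : seq S) := \sum_(i < k) c 0 i * x`_i.
Lemma lcx_lcv k c x : (forall i, (i < k)%N -> N x`_i) -> lcx c x = lcv (c *m cmxS k x).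
Proof.
move=> Hx; rewrite /lcv /lcx.
under [RHS]eq_bigr do rewrite mxE mulr_suml.
rewrite exchange_big /=; apply: eq_bigr => i _.
rewrite -{1}(coefsK (Hx i (ltn_ord i))) /lcv mulr_sumr; apply: eq_bigr => j _.
by rewrite mulrA !mxE.
Qed.
Lemma lcx_N k (c : 'rV[S]_k) x : (forall i, (i < k)%N -> N x`_i) -> N (lcx c x).
Proof. by move=> Hx; rewrite lcx_lcv //; apply: lcv_N. Qed.

Definition rowk k (c : seq S) : 'rV[S]_k := \row_i c`_i.
Lemma lin_comb_lcx x c : lin_comb c x = lcx (rowk (size x) c) x.
Proof. by rewrite /lcx /lin_comb; apply: eq_bigr => i _; rewrite mxE. Qed.
Definition seqk k (u : 'rV[S]_k) : seq S := [seq u 0 j | j <- enum 'I_k].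
Lemma seqk_nth k u (j : 'I_k) : (seqk u)`_j = u 0 j.
Proof. by rewrite (nth_map j) ?size_enum_ord // nth_ord_enum. Qed.
Lemma rowk_seqk k u : rowk k (seqk u) = u.
Proof. by apply/matrixP => i j; rewrite !mxE ord1 seqk_nth. Qed.

Lemma liftmE m n (M : 'M[F]_(m, n)) i j : pi (liftm M i j) = M i j.
Proof. by rewrite mxE rpi_repr. Qed.

Lemma cmx_cat k1 k2 x1 x2 : size x1 = k1 ->
  cmx (k1 + k2) (x1 ++ x2) = col_mx (cmx k1 x1) (cmx k2 x2).
Proof.
move=> s1; apply/matrixP => i j; rewrite !mxE.
case: splitP => i' ->; rewrite !mxE nth_cat s1.
  by rewrite ltn_ord.
by rewrite ltnNge leq_addr /= addKn.
Qed.

Lemma cmx_g_coefs (j : 'I_d) : cvec g`_j = cvec (lcv (delta_mx 0 j)).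
Proof. by rewrite lcv_delta. Qed.

Section WithQ2.
Variable Q : S -> Prop.
Hypotheses (HQ : is_ideal Q) (HQ2 : forall z, ideal_sq N z -> Q z).
Local Notation E := (Emx Q).

Lemma cvec_lcx k (c : 'rV[S]_k) x : (forall i, (i < k)%N -> N x`_i) ->
  cvec (lcx c x) *m E = map_mx pi c *m cmx k x *m E.
Proof. by move=> Hx; rewrite lcx_lcv // cvec_lcv // map_mxM. Qed.

Lemma cmx_g : cmx d g *m E = E.
Proof.
apply/row_matrixP => j; rewrite row_mul row_cmx cmx_g_coefs cvec_lcv //.
by rewrite map_delta_mx -rowE.
Qed.

Lemma indep_iff k x : size x = k -> (forall i, (i < k)%N -> N x`_i) ->
  (lin_indep_mod N Q x <-> row_free (cmx k x *m E)).
Proof.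
move=> sx Hx; subst k; split.
- move=> Hi; apply: inj_row_free => v Hv.
  have := Hi (seqk (liftm v)).
  rewrite lin_comb_lcx rowk_seqk (Q_cvec HQ HQ2 (lcx_N _ Hx)) cvec_lcx // liftmK.
  rewrite -mulmxA Hv => /(_ erefl) hN.
  apply/rowP => j; rewrite mxE -liftmE; apply/rpi0.
  by have := hN j (ltn_ord j); rewrite seqk_nth.
- move=> rf c; rewrite lin_comb_lcx (Q_cvec HQ HQ2 (lcx_N _ Hx)) cvec_lcx // -mulmxA.
  move=> h; have : map_mx pi (rowk (size x) c) = 0.
    apply: (row_free_inj rf); by rewrite h mul0mx.
  move=> /matrixP h0 i hi; apply/rpi0.
  by have := h0 0 (Ordinal hi); rewrite !mxE.
Qed.

Lemma span_iff k x : size x = k -> (forall i, (i < k)%N -> N x`_i) ->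
  ((forall z, N z -> exists c, Q (z - lin_comb c x)) <-> (E <= cmx k x *m E)%MS).
Proof.
move=> sx Hx; subst k; split.
- move=> Hs; apply/row_subP => j; rewrite rowE.
  have := Hs _ (lcv_N (liftm (delta_mx 0 j))) => -[c].
  rewrite lin_comb_lcx (cvec_eqQ HQ HQ2 (lcv_N _) (lcx_N _ Hx)) cvec_lcv // liftmK => ->.
  by rewrite cvec_lcx // -mulmxA submxMl.
- move=> sE z Nz.
  have : (cvec z *m E <= cmx (size x) x *m E)%MS by apply: submx_trans sE; exact: submxMl.
  case/submxP => w hw; exists (seqk (liftm w)).
  rewrite lin_comb_lcx rowk_seqk (cvec_eqQ HQ HQ2 Nz (lcx_N _ Hx)) cvec_lcx // liftmK.
  by rewrite hw mulmxA.
Qed.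

Lemma exists_family k (U : 'M[F]_(k, d)) : exists x,
  [/\ size x = k, (forall i, (i < k)%N -> N x`_i) & cmx k x *m E = U *m E].
Proof.
exists [seq lcv (row i (liftm U)) | i <- enum 'I_k].
have nthx (i : 'I_k) : [seq lcv (row i (liftm U)) | i <- enum 'I_k]`_i = lcv (row i (liftm U)).
  by rewrite (nth_map i) ?size_enum_ord // nth_ord_enum.
split; first by rewrite size_map size_enum_ord.
  move=> i hi; rewrite -[i]/(nat_of_ord (Ordinal hi)) nthx; exact: lcv_N.
apply/row_matrixP => i; rewrite !row_mul row_cmx nthx cvec_lcv //.
by rewrite map_row liftmK.
Qed.

End WithQ2.

Lemma lcxD k (u v : 'rV[S]_k) x : lcx (u + v) x = lcx u x + lcx v x.
Proof. by rewrite /lcx -big_split; apply: eq_bigr => j _; rewrite mxE mulrDl. Qed.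
Lemma lcxZ k a (u : 'rV[S]_k) x : lcx (a *: u) x = a * lcx u x.
Proof. by rewrite /lcx mulr_sumr; apply: eq_bigr => j _; rewrite mxE mulrA. Qed.

Lemma nakayama (J : S -> Prop) : is_ideal J ->
  (forall z, N z -> exists u v, [/\ J u, ideal_sq N v & z = u + v]) ->
  forall z, N z -> J z.
Proof.
move=> HJ Hs.
have Hw : forall j : 'I_d, exists w : 'rV[S]_d, (forall l, N (w 0 l)) /\ J (g`_j - lcv w).
  move=> j; have [u [v [Ju [a [b [sab [Hab ev]]]] e]]] := Hs _ (g_N j).
  have Hb : forall i, (i < size b)%N -> N b`_i by move=> i hi; case: (Hab i); rewrite ?sab.
  exists (rowk (size b) a *m cmxS (size b) b); split.
    move=> l; rewrite mxE; apply: ideal_sum; first exact: N_ideal.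
    move=> i; rewrite mxE; case: N_ideal => _ _ NM; rewrite mulrC; apply: NM.
    by case: (Hab i); rewrite ?sab.
  rewrite -lcx_lcv // -lin_comb_lcx -ev e addrK //.
pose wj (j : 'I_d) := epsilon (inhabits 0)
   (fun w : 'rV[S]_d => (forall l, N (w 0 l)) /\ J (g`_j - lcv w)).
have wjP j : (forall l, N (wj j 0 l)) /\ J (g`_j - lcv (wj j)).
  exact: (epsilon_spec (inhabits 0) _ (Hw j)).
pose W : 'M[S]_d := \matrix_(j, l) wj j 0 l.
pose Gc : 'cV[S]_d := \col_j g`_j.
pose A : 'M[S]_d := 1%:M - W.
have AG (j : 'I_d) : J ((A *m Gc) j 0).
  have -> : (A *m Gc) j 0 = g`_j - lcv (wj j).
    rewrite /A mulmxBl mul1mx !mxE; congr (_ - _); rewrite /lcv.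
    by apply: eq_bigr => l _; rewrite !mxE.
  by case: (wjP j).
have dG (j : 'I_d) : J (\det A * g`_j).
  have : ((\adj A *m A) *m Gc) j 0 = \det A * g`_j.
    by rewrite mul_adj_mx mul_scalar_mx !mxE.
  move=> <-; rewrite -mulmxA mxE; apply: ideal_sum => // l.
  by case: HJ => _ _ JM; apply: JM.
have detU : ~ N (\det A).
  move=> /(rpi0 HN); rewrite -det_map_mx /A map_mxB map_mx1.
  have -> : map_mx (rpi HN) W = 0.
    by apply/matrixP => i l; rewrite !mxE; apply/rpi0; case: (wjP i).
  by rewrite subr0 det1 => /eqP; rewrite oner_eq0.
have [_ _ Hu] := HN.
have [y hy] := Hu _ detU.
have gJ j : (j < d)%N -> J g`_j.
  move=> hj; have := dG (Ordinal hj) => /= h.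
  have -> : g`_j = y * (\det A * g`_j) by rewrite mulrA (mulrC y) hy mul1r.
  by case: HJ => _ _ JM; apply: JM.
move=> z /HG [c ->]; exact: lin_comb_ideal.
Qed.

Section WithI.
Variable I : S -> Prop.
Hypothesis HI : is_ideal I.
Local Notation Q := (ideal_add (ideal_sq N) I).
Local Notation E := (Emx Q).

Lemma HQ_I : is_ideal Q.
Proof. exact: ideal_add_ideal (ideal_sq_ideal N_ideal) HI. Qed.
Lemma HQ2_I z : ideal_sq N z -> Q z.
Proof. by move=> h; exists z, 0; split; rewrite ?addr0 //; case: HI. Qed.

Lemma generates_iff k x : size x = k -> (generates I N x <->
  (forall i, (i < k)%N -> N x`_i) /\ (E <= cmx k x *m E)%MS).
Proof.
move=> sx; subst k; split.
- move=> [Hx Hg]; split => //; apply/(span_iff HQ_I HQ2_I erefl Hx).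
  move=> z Nz; have [c Ic] := Hg z Nz; exists c; exists 0, (z - lin_comb c x).
  split => //; last by rewrite add0r.
  by case: (ideal_sq_ideal N_ideal).
- move=> [Hx sE]; split => //.
  have Hs := proj2 (span_iff HQ_I HQ2_I erefl Hx) sE.
  pose J := fun z => exists c, I (z - lin_comb c x).
  have HJ : is_ideal J.
    case: HI => I0 ID IM; split.
    + by exists [::]; rewrite lin_comb_nil subrr.
    + move=> a b [c1 h1] [c2 h2]; exists (seqk (rowk (size x) c1 + rowk (size x) c2)).
      rewrite lin_comb_lcx rowk_seqk lcxD -!lin_comb_lcx.
      by rewrite opprD addrACA; apply: ID.
    + move=> r a [c h]; exists (seqk (r *: rowk (size x) c)).
      rewrite lin_comb_lcx rowk_seqk lcxZ -lin_comb_lcx -mulrBr.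
      exact: IM.
  apply: (nakayama HJ) => z Nz.
  have [c [u [v [uN vI e]]]] := Hs z Nz.
  exists (lin_comb c x + v), u; split => //.
    by exists c; rewrite addrC addKr.
  by rewrite -addrA (addrC v) -e addrC subrK.
Qed.

Lemma gen_size x : generates I N x -> (\rank E <= size x)%N.
Proof.
move=> /(generates_iff erefl) [_ sE].
by apply: leq_trans (mxrankS sE) _; exact: rank_leq_row.
Qed.

Lemma exists_min_family : exists x, [/\ size x = \rank E,
  (forall i, (i < \rank E)%N -> N x`_i) & cmx (\rank E) x *m E = row_base E].
Proof.
have [x [sx Hx e]] := exists_family HQ_I HQ2_I (row_base E *m pinvmx E).
exists x; split => //; rewrite e mulmxKpV //.
by rewrite eq_row_base.
Qed.

Lemma min_basis_iff k x : size x = k -> (min_basis I N x <->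
  [/\ (forall i, (i < k)%N -> N x`_i), row_free (cmx k x *m E) & k = \rank E]).
Proof.
move=> sx.
have [x0 [s0 H0 e0]] := exists_min_family.
have gx0 : generates I N x0.
  by apply/(generates_iff s0); split => //; rewrite e0 eq_row_base.
split.
- move=> [gx minx]; have := minx _ gx0; rewrite s0 sx => le1.
  have := gen_size gx; rewrite sx => le2.
  have ke : k = \rank E by apply/eqP; rewrite eqn_leq le1 le2.
  have [Hx sE] := (generates_iff sx).1 gx.
  split => //.
  rewrite /row_free eqn_leq rank_leq_row /= {1}ke.
  exact: mxrankS.
- move=> [Hx rf ke]; split.
    apply/(generates_iff sx); split => //.
    have := mxrank_leqif_sup (submxMl (cmx k x) E).
    move=> [_ <-]; move: rf; rewrite /row_free => /eqP ->; by rewrite ke.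
  by move=> x' gx'; rewrite sx ke; apply: gen_size.
Qed.

Lemma exists_min_basis : exists x, min_basis I N x.
Proof.
have [x0 [s0 H0 e0]] := exists_min_family.
exists x0; apply/(min_basis_iff s0); split => //.
by rewrite e0; exact: row_base_free.
Qed.

Lemma cotan_dim_eq : cotan_dim I N = \rank E.
Proof.
apply: dimof_eq.
  have [x0 [s0 H0 e0]] := exists_min_family.
  exists x0; split => //; apply/(indep_iff HQ_I HQ2_I s0 H0).
  by rewrite e0; exact: row_base_free.
move=> k [x [sx Hx]] /(indep_iff HQ_I HQ2_I sx Hx) rf.
move: rf; rewrite /row_free => /eqP <-; exact: mxrankS (submxMl _ _).
Qed.

End WithI.
End Coord.

Lemma rhomB (R S : comNzRingType) (f : R -> S) a b : rhom f -> f (a - b) = f a - f b.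
Proof.
move=> hf; have f0 := rhom0 hf; case: hf => fD _.
apply: (@addrI _ (f b)); rewrite -fD addrC subrK addrC subrK //.
Qed.

Lemma ideal_sq_sub (S : comNzRingType) (N : S -> Prop) z : is_ideal N -> ideal_sq N z -> N z.
Proof.
move=> HN [a [b [sab [H ->]]]]; apply: lin_comb_ideal => // i hi.
by case: (H i); rewrite ?sab.
Qed.

Lemma row_free_top (F : fieldType) m1 m2 n (A : 'M[F]_(m1, n)) (B : 'M[F]_(m2, n)) :
  row_free (col_mx A B) -> row_free A.
Proof.
move=> rf; apply: inj_row_free => v hv.
have : row_mx v 0 *m col_mx A B = 0 *m col_mx A B by rewrite mul_row_col hv mul0mx addr0 mul0mx.
move=> /(row_free_inj rf) /eqP; rewrite -row_mx0 => /eqP /eq_row_mx [-> _] //.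
Qed.

Lemma sub_coker (F : fieldType) m1 m2 m3 n (V : 'M[F]_(m1, n)) (K : 'M[F]_(m2, n)) (B : 'M[F]_(m3, n)) :
  (V *m cokermx K <= B *m cokermx K)%MS -> (V <= K + B)%MS.
Proof.
case/submxP => w hw.
have : ((V - w *m B) <= K)%MS by rewrite submxE mulmxBl hw mulmxA subrr.
move=> h; rewrite -(subrK (w *m B) V); apply: addmx_sub_adds => //; exact: submxMl.
Qed.

Section Cross.
Variables (R S : comNzRingType) (M : R -> Prop) (HM : local_ring M) (gR : seq R)
  (HGR : forall z, M z <-> exists c, z = lin_comb c gR)
  (N : S -> Prop) (HN : local_ring N) (gS : seq S)
  (HGS : forall z, N z <-> exists c, z = lin_comb c gS)
  (f : R -> S) (hf : rhom f) (fMN : forall z, M z -> N (f z)).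
Local Notation dR := (size gR).
Local Notation CR := (cmx HM gR).
Local Notation CS := (cmx HN gS).
Local Notation ER := (Emx HM gR).
Local Notation ES := (Emx HN gS).
Local Notation F := (CS dR (map f gR)).

Lemma lcx_map k (c : 'rV[R]_k) z : size z = k -> f (lcx c z) = lcx (map_mx f c) (map f z).
Proof.
move=> sz; rewrite /lcx rhom_sum //; apply: eq_bigr => i _.
by case: hf => _ fM; rewrite fM mxE (nth_map 0) // sz.
Qed.

Lemma fsq z : ideal_sq M z -> ideal_sq N (f z).
Proof.
move=> [a [b [sab [H ->]]]]; exists (map f a), (map f b).
rewrite !size_map; split => //; split; last exact: lin_comb_map.
move=> i hi; rewrite !(nth_map 0) -?sab //.
by case: (H i hi) => h1 h2; split; apply: fMN.
Qed.

Lemma transfer (QR : R -> Prop) (QS : S -> Prop)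
  (HQR : is_ideal QR) (HQR2 : forall z, ideal_sq M z -> QR z)
  (HQS : is_ideal QS) (HQS2 : forall z, ideal_sq N z -> QS z)
  (fQ : forall z, QR z -> QS (f z)) k r x z :
  size x = k -> size z = r ->
  (forall i, (i < k)%N -> M x`_i) -> (forall i, (i < r)%N -> M z`_i) ->
  (CR k x *m ER QR <= CR r z *m ER QR)%MS ->
  (CS k (map f x) *m ES QS <= CS r (map f z) *m ES QS)%MS.
Proof.
move=> sx sz Hx Hz /row_subP h; apply/row_subP => i.
have := h i; rewrite row_mul row_cmx => /submxP [w hw].
set c := liftm w.
have e1 : cvec HM gR x`_i *m ER QR = cvec HM gR (lcx c z) *m ER QR.
  by rewrite (cvec_lcx HM HGR HQR HQR2) // liftmK hw mulmxA.
have Nx : M x`_i by apply: Hx.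
move: e1; rewrite -(cvec_eqQ HM HGR HQR HQR2 Nx (lcx_N HGR _ Hz)) => /fQ.
rewrite rhomB // lcx_map // (cvec_eqQ HN HGS HQS HQS2 (fMN Nx)); last first.
  apply: (lcx_N HGS) => j hj; rewrite (nth_map 0) ?sz //; apply: fMN; exact: Hz.
rewrite row_mul row_cmx (nth_map 0) ?sx // => ->.
rewrite (cvec_lcx HN HGS HQS HQS2); first by rewrite -mulmxA submxMl.
by move=> j hj; rewrite (nth_map 0) ?sz //; apply: fMN; exact: Hz.
Qed.

Lemma gR_M j : M gR`_j.
Proof. exact: (g_N HM HGR). Qed.

Lemma image_dim_eq (J : S -> Prop) (HJ : is_ideal J) :
  image_dim f M J N = \rank (F *m ES (ideal_add (ideal_sq N) J)).
Proof.
have HQ := HQ_I HN HJ.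
have HQ2 : forall z, ideal_sq N z -> ideal_add (ideal_sq N) J z by move=> z; apply: HQ2_I.
apply: dimof_eq.
- set r := \rank _; pose h := maxrankfun (F *m ES (ideal_add (ideal_sq N) J)).
  exists [seq gR`_(h i) | i <- enum 'I_r].
  have nthx (i : 'I_r) : [seq gR`_(h i) | i <- enum 'I_r]`_i = gR`_(h i).
    by rewrite (nth_map i) ?size_enum_ord // nth_ord_enum.
  have sx : size [seq gR`_(h i) | i <- enum 'I_r] = r by rewrite size_map size_enum_ord.
  split => //.
    by move=> i hi; rewrite -[i]/(nat_of_ord (Ordinal hi)) nthx; exact: gR_M.
  have Hfx : forall i, (i < r)%N -> N (map f [seq gR`_(h i) | i <- enum 'I_r])`_i.
    by move=> i hi; rewrite (nth_map 0) ?sx // -[i]/(nat_of_ord (Ordinal hi)) nthx; apply: fMN; exact: gR_M.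
  apply/(indep_iff HN HGS HQ HQ2 (etrans (size_map _ _) sx) Hfx).
  have -> : CS r (map f [seq gR`_(h i) | i <- enum 'I_r]) *m ES (ideal_add (ideal_sq N) J) = rowsub h (F *m ES (ideal_add (ideal_sq N) J)).
    apply/row_matrixP => i; rewrite row_rowsub !row_mul !row_cmx.
    by rewrite (nth_map 0) ?sx // nthx (nth_map 0).
  exact: maxrowsub_free.
- move=> k [x [sx Hx]].
  have Hfx : forall i, (i < k)%N -> N (map f x)`_i.
    by move=> i hi; rewrite (nth_map 0) ?sx //; apply: fMN; apply: Hx.
  move=> /(indep_iff HN HGS HQ HQ2 (etrans (size_map _ _) sx) Hfx); rewrite /row_free => /eqP <-.
  apply: mxrankS.
  have sq := ideal_sq_ideal (N_ideal HM).
  apply: (transfer sq (fun z h => h) HQ HQ2 _ sx erefl Hx) => //.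
  + by move=> z /fsq; apply: HQ2.
  + by move=> i hi; exact: gR_M.
  + by rewrite (cmx_g HM HGR sq) //; apply: submxMl.
Qed.



Lemma lin_comb_lcxk (T : comNzRingType) k (x c : seq T) : size x = k -> lin_comb c x = lcx (rowk k c) x.
Proof. by move=> sx; subst k; exact: lin_comb_lcx. Qed.

Lemma BR_iff (I : R -> Prop) (HI : is_ideal I) (J : S -> Prop) (HJ : is_ideal J)
  (fIJ : forall z, I z -> J (f z)) :
  basically_regular f I M J N <->
  \rank (F *m ES (ideal_add (ideal_sq N) J)) = \rank (ER (ideal_add (ideal_sq M) I)).
Proof.
have HQR := HQ_I HM HI.
have HQR2 : forall z, ideal_sq M z -> ideal_add (ideal_sq M) I z by move=> z; apply: HQ2_I.
have HQS := HQ_I HN HJ.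
have HQS2 : forall z, ideal_sq N z -> ideal_add (ideal_sq N) J z by move=> z; apply: HQ2_I.
have fQ : forall z, ideal_add (ideal_sq M) I z -> ideal_add (ideal_sq N) J (f z).
  move=> z [u [v [hu hv ->]]]; exists (f u), (f v); split; [exact: fsq | exact: fIJ |].
  by case: hf.
have key : forall k x, size x = k -> generates I M x ->
   (F *m ES (ideal_add (ideal_sq N) J) :=: CS k (map f x) *m ES (ideal_add (ideal_sq N) J))%MS.
  move=> k x sx gx; have [Hx sE] := (generates_iff HM HGR HI sx).1 gx.
  apply/eqmxP/andP; split.
  - apply: (transfer HQR HQR2 HQS HQS2 fQ erefl sx) => //.
      by move=> i hi; exact: gR_M.
    by rewrite (cmx_g HM HGR HQR HQR2).
  - apply: (transfer HQR HQR2 HQS HQS2 fQ sx erefl) => //.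
      by move=> i hi; exact: gR_M.
    by rewrite (cmx_g HM HGR HQR HQR2) submxMl.
split.
- move=> br; have [x0 mb0] := exists_min_basis HM HGR HI.
  have [Hx0 rf0 k0] := (min_basis_iff HM HGR HI erefl).1 mb0.
  have [y mby] := br x0 mb0.
  have sw : size (map f x0 ++ y) = size x0 + size y by rewrite size_cat size_map.
  have [_ rfw _] := (min_basis_iff HN HGS HJ sw).1 mby.
  move: rfw; rewrite (cmx_cat HN gS _ _ (size_map _ _)) mul_col_mx => /row_free_top rf.
  rewrite (key _ _ erefl mb0.1); move: rf; rewrite /row_free => /eqP ->.
  exact: k0.
- move=> hr x mb.
  have [Hx rfx kx] := (min_basis_iff HM HGR HI erefl).1 mb.
  have kk := key _ _ erefl mb.1.
  set Y := CS (size x) (map f x).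
  set E := ES (ideal_add (ideal_sq N) J).
  set Z := Y *m E.
  have rY : \rank Z = size x by rewrite -kk hr kx.
  set D := (E :\: Z)%MS.
  set T := row_base D.
  have TE : (T <= E)%MS by rewrite eq_row_base diffmxSl.
  have [y [sy Hy ey]] := exists_family HGS HQS HQS2 (T *m pinvmx E).
  rewrite mulmxKpV // in ey.
  exists y.
  have sw : size (map f x ++ y) = size x + \rank D by rewrite size_cat size_map sy.
  apply/(min_basis_iff HN HGS HJ sw); split.
  + move=> i hi; rewrite nth_cat size_map; case: ifP => h.
      rewrite (nth_map 0) //; apply: fMN; exact: Hx.
    by apply: Hy; rewrite ltn_subLR ?hi // leqNgt h.
  + rewrite (cmx_cat HN gS _ _ (size_map _ _)) mul_col_mx -/Y -/E -/Z ey.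
    rewrite /row_free -addsmxE mxrank_disjoint_sum.
      by rewrite rY /T (eq_row_base D).
    apply/eqP; rewrite -submx0 (cap_eqmx (eqmx_refl Z) (eq_row_base D)) capmxC capmx_diff.
    exact: submx_refl.
  + have := mxrank_cap_compl E Z.
    rewrite (capmx_idPr (submxMl Y E)) rY => <-; by [].
Qed.

Lemma Kext_eq :
  (Kmx HN gS (ideal_add (ideal_sq N) (ideal_ext f M)) :=:
   Kmx HN gS (ideal_add (ideal_sq N) (zero_ideal S)) + F)%MS.
Proof.
set Q0 := ideal_add (ideal_sq N) (zero_ideal S).
set Qm := ideal_add (ideal_sq N) (ideal_ext f M).
have HQ0 : is_ideal Q0 := HQ_I HN (zero_ideal_ideal S).
have HQ02 : forall z, ideal_sq N z -> Q0 z by move=> z; apply: HQ2_I; exact: zero_ideal_ideal.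
have HQm : is_ideal Qm := HQ_I HN (ideal_ext_ideal f M).
have HQm2 : forall z, ideal_sq N z -> Qm z by move=> z; apply: HQ2_I; exact: ideal_ext_ideal.
set K0 := Kmx HN gS Q0.
set Km := Kmx HN gS Qm.
have FN : forall i, (i < dR)%N -> N (map f gR)`_i.
  by move=> i hi; rewrite (nth_map 0) //; apply: fMN; exact: gR_M.
rewrite -/Km -/K0.
apply/eqmxP/andP; split.
- apply/row_subP => i.
  have [u [<- Qu]] := (KmxP HQm (row i Km)).1 (row_sub i Km).
  apply: sub_coker.
  change (map_mx (rpi HN) u *m ES Q0 <= F *m ES Q0)%MS.
  pose T := fun t => N t /\ (cvec HN gS t *m ES Q0 <= F *m ES Q0)%MS.
  have HT : is_ideal T.
    have [N0 ND NM] := N_ideal HN.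
    split.
    + split => //; rewrite ((Q_cvec HN HGS HQ0 HQ02 N0).1) ?sub0mx //.
      by case: HQ0.
    + move=> a b [Na ha] [Nb hb]; split; first exact: ND.
      by rewrite (cvecD HN HGS HQ0 HQ02 Na Nb) addmx_sub.
    + move=> r a [Na ha]; split; first exact: NM.
      by rewrite (cvecZ HN HGS HQ0 HQ02 r Na) scalemx_sub.
  have Tf : forall a, M a -> T (f a).
    move=> a Ma; split; first exact: fMN.
    have [c ->] := (HGR a).1 Ma.
    rewrite lin_comb_map // (lin_comb_lcxk _ (size_map _ _)).
    rewrite (cvec_lcx HN HGS HQ0 HQ02) //; rewrite -mulmxA; exact: submxMl.
  have [s [t [Ns Jt e]]] := Qu.
  have Tt : T t.
    case: Jt => a [b [Ha ->]]; apply: lin_comb_ideal => // j hj.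
    by rewrite (nth_map 0) -?(size_map f) //; apply: Tf; apply: Ha; rewrite -(size_map f).
  have Nsq : N s by apply: ideal_sq_sub => //; exact: N_ideal.
  rewrite -(cvec_lcv HN HGS HQ0 HQ02) e (cvecD HN HGS HQ0 HQ02 Nsq Tt.1).
  rewrite ((Q_cvec HN HGS HQ0 HQ02 Nsq).1 (HQ02 _ Ns)) add0r; exact: Tt.2.
- rewrite addsmx_sub; apply/andP; split.
  + apply/row_subP => i; apply/(KmxP HQm).
    have [u [eu Qu]] := (KmxP HQ0 (row i K0)).1 (row_sub i K0).
    exists u; split => //.
    have [s [t [Ns -> ->]]] := Qu; exists s, 0; split => //.
      by case: (ideal_ext_ideal f M).
  + apply/row_subP => i; rewrite row_cmx; apply/(KmxP HQm).
    rewrite /cvec (inK_lcv HN HGS HQm HQm2) (coefsK HGS); last exact: FN.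
    exists 0, (map f gR)`_i; split; [by case: (ideal_sq_ideal (N_ideal HN)) | | by rewrite add0r].
    exists [:: gR`_i], [:: 1]; split.
      by case=> // _; exact: gR_M.
    by rewrite /lin_comb /= big_ord1 /= mul1r (nth_map 0).
Qed.

Lemma Kext_rank :
  \rank (ES (ideal_add (ideal_sq N) (zero_ideal S))) =
  (\rank (ES (ideal_add (ideal_sq N) (ideal_ext f M)))
   + \rank (F *m ES (ideal_add (ideal_sq N) (zero_ideal S))))%N.
Proof.
set Q0 := ideal_add (ideal_sq N) (zero_ideal S).
set Qm := ideal_add (ideal_sq N) (ideal_ext f M).
have HQ0 : is_ideal Q0 := HQ_I HN (zero_ideal_ideal S).
have HQ02 : forall z, ideal_sq N z -> Q0 z by move=> z; apply: HQ2_I; exact: zero_ideal_ideal.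
have HQm : is_ideal Qm := HQ_I HN (ideal_ext_ideal f M).
have HQm2 : forall z, ideal_sq N z -> Qm z by move=> z; apply: HQ2_I; exact: ideal_ext_ideal.
set K0 := Kmx HN gS Q0.
set Km := Kmx HN gS Qm.
have FN : forall i, (i < dR)%N -> N (map f gR)`_i.
  by move=> i hi; rewrite (nth_map 0) //; apply: fMN; exact: gR_M.
have eqK : (Km :=: K0 + F)%MS by exact: Kext_eq.
have r1 : \rank (ES Qm) = (size gS - \rank Km)%N by rewrite /Emx mxrank_coker.
have r2 : \rank (ES Q0) = (size gS - \rank K0)%N by rewrite /Emx mxrank_coker.
have r3 : \rank (F *m ES Q0) = (\rank (F + K0)%MS - \rank K0)%N.
  rewrite /Emx -/K0. exact: rank_coker_sum.
have r4 : \rank Km = \rank (K0 + F)%MS by rewrite eqK.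
have r5 : \rank (F + K0)%MS = \rank (K0 + F)%MS by rewrite addsmxC.
have l1 : (\rank K0 <= \rank (F + K0)%MS)%N by apply: mxrankS; exact: addsmxSr.
have l2 : (\rank (F + K0)%MS <= size gS)%N by exact: rank_leq_col.
move: r1 r2 r3 r4 r5 l1 l2.
lia.
Qed.

Lemma fQI (I : R -> Prop) (J : S -> Prop) (fIJ : forall z, I z -> J (f z)) z :
  ideal_add (ideal_sq M) I z -> ideal_add (ideal_sq N) J (f z).
Proof.
move=> [u [v [hu hv ->]]]; exists (f u), (f v); split; [exact: fsq | exact: fIJ |].
by case: hf.
Qed.

Lemma image_le (I : R -> Prop) (HI : is_ideal I) (J : S -> Prop) (HJ : is_ideal J)
  (fIJ : forall z, I z -> J (f z)) :
  (\rank (F *m ES (ideal_add (ideal_sq N) J)) <= \rank (ER (ideal_add (ideal_sq M) I)))%N.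
Proof.
have HQR := HQ_I HM HI.
have HQR2 : forall z, ideal_sq M z -> ideal_add (ideal_sq M) I z by move=> z; apply: HQ2_I.
have HQS := HQ_I HN HJ.
have HQS2 : forall z, ideal_sq N z -> ideal_add (ideal_sq N) J z by move=> z; apply: HQ2_I.
have fQ : forall z, ideal_add (ideal_sq M) I z -> ideal_add (ideal_sq N) J (f z).
  move=> z [u [v [hu hv ->]]]; exists (f u), (f v); split; [exact: fsq | exact: fIJ |].
  by case: hf.
have [x0 mb0] := exists_min_basis HM HGR HI.
have [Hx0 rf0 k0] := (min_basis_iff HM HGR HI erefl).1 mb0.
have [_ sE] := (generates_iff HM HGR HI erefl).1 mb0.1.
have le : (F *m ES (ideal_add (ideal_sq N) J) <=
           CS (size x0) (map f x0) *m ES (ideal_add (ideal_sq N) J))%MS.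
  apply: (transfer HQR HQR2 HQS HQS2 fQ erefl erefl) => //.
    by move=> i hi; exact: gR_M.
  by rewrite (cmx_g HM HGR HQR HQR2).
apply: leq_trans (mxrankS le) _; rewrite -k0; exact: rank_leq_row.
Qed.

End Cross.

Lemma rank_rel (F : fieldType) n k1 k2 k3 (K : 'M[F]_(k1, n)) (K' : 'M[F]_(k2, n))
  (P : 'M[F]_(k3, n)) k4 (G : 'M[F]_(k4, n)) :
  (K' :=: K + G)%MS -> (G <= K + P)%MS ->
  \rank (P *m cokermx K) = (\rank (P *m cokermx K') + \rank (G *m cokermx K))%N.
Proof.
move=> eK sG.
rewrite !rank_coker_sum.
have e1 : (P + K' :=: P + K)%MS.
  apply: eqmx_trans (adds_eqmx (eqmx_refl P) eK) _.
  apply/eqmxP/andP; split.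
    rewrite addsmx_sub addsmxSl /= addsmx_sub addsmxSr /=.
    by rewrite addsmxC in sG.
  by rewrite addsmxS // addsmxSl.
rewrite e1 eK.
have l1 : (\rank K <= \rank (K + G)%MS)%N by apply: mxrankS; exact: addsmxSl.
have l2 : (\rank (K + G)%MS <= \rank (P + K)%MS)%N.
  by apply: mxrankS; rewrite addsmx_sub addsmxSr /= addsmxC.
have l3 : \rank (G + K)%MS = \rank (K + G)%MS by rewrite addsmxC.
move: l1 l2 l3; lia.
Qed.

Local Close Scope ring_scope.

Lemma final_arith (P : Prop) (eA a b p p' s s' c0 c' : nat) :
  p = p' + a -> c0 = c' + b -> s = s' + b -> b <= a -> a <= eA -> s <= p -> s' <= p' ->
  (P -> p' = 0) ->
  ((b = eA <-> a = eA /\ p - s = p' - s') /\ (b = eA <-> a = eA /\ p - p' = c0 - c')) /\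
  (s = p <-> s' = p' /\ eA - b = eA - a) /\
  (a = eA -> s = p -> b = eA) /\
  (P -> b = eA -> a = eA /\ s = p).
Proof.
move=> H1 H2 H3 H4 H5 H6 H7 H8.
split; first split.
- by split => [h|[h1 h2]]; [split; lia | lia].
- by split => [h|[h1 h2]]; [split; lia | lia].
split; first by split => [h|[h1 h2]]; [split; lia | lia].
split; first by move=> h1 h2; lia.
by move=> surj h; have h8 := H8 surj; split; lia.
Qed.

Unset Implicit Arguments.
Set Strict Implicit.

Theorem corollary3p11 (A B C : comNzRingType)
  (m : A -> Prop) (n : B -> Prop) (q : C -> Prop)
  (phi : {rmorphism A -> B}) (psi : {rmorphism B -> C}) :
  noetherian A -> noetherian B -> noetherian C ->
  local_ring m -> local_ring n -> local_ring q ->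
  local_hom phi m n -> local_hom psi n q ->
  let psiphi := (psi \o phi)%FUN in
  let mB := ideal_ext phi m in
  let mC := ideal_ext psiphi m in
  (* (1) *)
  ((basically_regular psiphi (zero_ideal A) m (zero_ideal C) q <->
      basically_regular phi (zero_ideal A) m (zero_ideal B) n /\
      reg_defect psi (zero_ideal B) n (zero_ideal C) q = reg_defect psi mB n mC q)
   /\
   (basically_regular psiphi (zero_ideal A) m (zero_ideal C) q <->
      basically_regular phi (zero_ideal A) m (zero_ideal B) n /\
      reg_defect id (zero_ideal B) n mB n = reg_defect id (zero_ideal C) q mC q))
  /\
  (* (2) *)
  (basically_regular psi (zero_ideal B) n (zero_ideal C) q <->
     basically_regular psi mB n mC q /\
     reg_defect psiphi (zero_ideal A) m (zero_ideal C) q =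
     reg_defect phi (zero_ideal A) m (zero_ideal B) n)
  /\
  (* (3) *)
  (basically_regular phi (zero_ideal A) m (zero_ideal B) n ->
   basically_regular psi (zero_ideal B) n (zero_ideal C) q ->
   basically_regular psiphi (zero_ideal A) m (zero_ideal C) q)
  /\
  (* (4) *)
  ((forall b, exists a, phi a = b) ->
   basically_regular psiphi (zero_ideal A) m (zero_ideal C) q ->
   basically_regular phi (zero_ideal A) m (zero_ideal B) n /\
   basically_regular psi (zero_ideal B) n (zero_ideal C) q).
Proof.
Local Open Scope ring_scope.
move=> nA nB nC hm hn hq lphi lpsi; cbv zeta.
have [gA HGA] := nA m (N_ideal hm).
have [gB HGB] := nB n (N_ideal hn).
have [gC HGC] := nC q (N_ideal hq).
have rphi : rhom phi := rhom_rmorph phi.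
have rpsi : rhom psi := rhom_rmorph psi.
have rpp : rhom (psi \o phi)%FUN := rhom_comp rphi rpsi.
have lpp : forall z, m z -> q ((psi \o phi)%FUN z) by move=> z /lphi /lpsi.
have I0A := zero_ideal_ideal A.
have I0B := zero_ideal_ideal B.
have I0C := zero_ideal_ideal C.
have ImB : is_ideal (ideal_ext phi m) := ideal_ext_ideal phi m.
have ImC : is_ideal (ideal_ext (psi \o phi)%FUN m) := ideal_ext_ideal (psi \o phi)%FUN m.
have z0 : forall (R S : comNzRingType) (f : R -> S), rhom f ->
    forall z, zero_ideal R z -> zero_ideal S (f z).
  by move=> R S f hf z ->; exact: rhom0.
have fmBmC : forall z, ideal_ext phi m z -> ideal_ext (psi \o phi)%FUN m (psi z).
  move=> z [a [b [Ha ->]]]; exists a, (map psi b); split => //.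
  by rewrite lin_comb_map // -map_comp.
have BRphi := BR_iff hm HGA hn HGB rphi lphi I0A I0B (z0 _ _ _ rphi).
have BRpp := BR_iff hm HGA hq HGC rpp lpp I0A I0C (z0 _ _ _ rpp).
have BRpsi := BR_iff hn HGB hq HGC rpsi lpsi I0B I0C (z0 _ _ _ rpsi).
have BRpsim := BR_iff hn HGB hq HGC rpsi lpsi ImB ImC fmBmC.
rewrite (propositional_extensionality _ _ BRphi) (propositional_extensionality _ _ BRpp).
rewrite (propositional_extensionality _ _ BRpsi) (propositional_extensionality _ _ BRpsim).
rewrite /reg_defect.
rewrite (cotan_dim_eq hm HGA I0A) (cotan_dim_eq hn HGB I0B) (cotan_dim_eq hn HGB ImB).
rewrite (cotan_dim_eq hq HGC I0C).
rewrite (image_dim_eq hm HGA hn HGB rphi lphi I0B) (image_dim_eq hm HGA hq HGC rpp lpp I0C).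
rewrite (image_dim_eq hn HGB hq HGC rpsi lpsi I0C) (image_dim_eq hn HGB hq HGC rpsi lpsi ImC).
rewrite (image_dim_eq hn HGB hn HGB (rhom_id B) (fun z h => h) ImB).
rewrite (image_dim_eq hq HGC hq HGC (rhom_id C) (fun z h => h) ImC).
have HQ0B := HQ_I hn I0B.
have HQ0B2 : forall z, ideal_sq n z -> ideal_add (ideal_sq n) (zero_ideal B) z by move=> z; apply: HQ2_I.
have HQ0C := HQ_I hq I0C.
have HQ0C2 : forall z, ideal_sq q z -> ideal_add (ideal_sq q) (zero_ideal C) z by move=> z; apply: HQ2_I.
have HQmB := HQ_I hn ImB.
have HQmB2 : forall z, ideal_sq n z -> ideal_add (ideal_sq n) (ideal_ext phi m) z by move=> z; apply: HQ2_I.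
have HQmC := HQ_I hq ImC.
have HQmC2 : forall z, ideal_sq q z -> ideal_add (ideal_sq q) (ideal_ext (psi \o phi)%FUN m) z.
  by move=> z; apply: HQ2_I.
rewrite !map_id (cmx_g hn HGB HQmB HQmB2) (cmx_g hq HGC HQmC HQmC2).
have H1 := Kext_rank hm HGA hn HGB rphi lphi.
have H2 := Kext_rank hm HGA hq HGC rpp lpp.
have H5 := image_le hm HGA hn HGB rphi lphi I0A I0B (z0 _ _ _ rphi).
have H6 := image_le hn HGB hq HGC rpsi lpsi I0B I0C (z0 _ _ _ rpsi).
have H7 := image_le hn HGB hq HGC rpsi lpsi ImB ImC fmBmC.
have fQB : forall z, ideal_add (ideal_sq n) (zero_ideal B) z ->
    ideal_add (ideal_sq q) (zero_ideal C) (psi z).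
  by move=> z; apply: fQI => //; exact: z0.
have Hx : forall i, (i < size gA)%N -> n ((map phi gA)`_i)%R.
  by move=> i hi; rewrite (nth_map 0%R) //; apply: lphi; exact: (g_N hm HGA).
have Hz : forall i, (i < size gB)%N -> n (gB`_i)%R by move=> i _; exact: (g_N hn HGB).
have sGc := @transfer _ _ _ hn _ HGB _ hq _ HGC _ rpsi lpsi _ _ HQ0B HQ0B2 HQ0C HQ0C2 fQB _ _ _ _ (size_map phi gA)
  (erefl (size gB)) Hx Hz.
rewrite (cmx_g hn HGB HQ0B HQ0B2) -map_comp in sGc.
have {}sGc := sGc (submxMl _ _).
have eK := Kext_eq hm HGA hq HGC rpp lpp.
rewrite !EmxE in sGc.
have H3 := rank_rel eK (sub_coker sGc).
rewrite -!EmxE in H3.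
have H4 : (\rank (cmx hq gC (size gA) (map (psi \o phi)%FUN gA) *m
             Emx hq gC (ideal_add (ideal_sq q) (zero_ideal C)))
          <= \rank (cmx hn gB (size gA) (map phi gA) *m
             Emx hn gB (ideal_add (ideal_sq n) (zero_ideal B))))%N.
  set E0B := Emx hn gB (ideal_add (ideal_sq n) (zero_ideal B)).
  set Fp := cmx hn gB (size gA) (map phi gA).
  have [y [sy Hy ey]] := exists_family HGB HQ0B HQ0B2 (row_base (Fp *m E0B) *m pinvmx E0B).
  rewrite mulmxKpV in ey; last by rewrite eq_row_base submxMl.
  have := @transfer _ _ _ hn _ HGB _ hq _ HGC _ rpsi lpsi _ _ HQ0B HQ0B2 HQ0C HQ0C2 fQB _ _ _ _ (size_map phi gA) sy Hx Hy.
  rewrite -map_comp ey eq_row_base => /(_ (submx_refl _)) /mxrankS le.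
  apply: leq_trans le _; exact: rank_leq_row.
have H8 : (forall b, exists a, phi a = b) ->
    \rank (Emx hn gB (ideal_add (ideal_sq n) (ideal_ext phi m))) = 0%N.
  move=> surj; rewrite EmxE mxrank_coker.
  suff : row_full (Kmx hn gB (ideal_add (ideal_sq n) (ideal_ext phi m))).
    by rewrite /row_full => /eqP ->; rewrite subnn.
  rewrite -sub1mx; apply/row_subP => i; apply/(KmxP HQmB).
  rewrite -(liftmK (row i 1%:M)) (inK_lcv hn HGB HQmB HQmB2).
  set u := liftm _.
  have nz : n (lcv u) by apply: (lcv_N HGB u).
  move: (lcv u) nz => z nz.
  have [a ea] := surj z.
  have ma : m a.
    case: (excluded_middle_informative (m a)) => // nma.
    have [_ n1 hu] := hn; have [_ _ hu'] := hm.
    have [y hy] := hu' _ nma.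
    exfalso; apply: n1.
    have : phi (a * y) = 1%R by rewrite hy rmorph1.
    rewrite rmorphM ea => <-.
    have [_ _ NM] := N_ideal hn.
    rewrite mulrC; apply: NM; exact: nz.
  exists 0%R, z; split; [by case: (ideal_sq_ideal (N_ideal hn)) | | by rewrite add0r].
  exists [:: a], [:: 1%R]; split; first by case.
  by rewrite /lin_comb /= big_ord1 /= mul1r ea.
exact: (final_arith H1 H2 H3 H4 H5 H6 H7 H8).
Qed.
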